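(* If a WCMDP is symmetric, then for every stationary Markov policy $\pi$ there exists a permutation invariant stationary Markov policy $\bar\pi$ such that \[ \mathbf{V}_0^{\bar\pi}=\Big(\frac1N\sum_{n=1}^N V^{\pi}_{0,n}\Big)\mathbf{1}, \] where $\mathbf{1}\in\mathbb{R}^N$ is the all-ones vector.
   Context: A WCMDP consists of $N$ sub-MDPs $n\in[N]$, each with finite state set $\mathcal{S}_n$, finite action set $\mathcal{A}_n$, transition kernel $p_n(s'|s,a)$ and reward $r_n(s,a)\in\mathbb{R}$, and a discount factor $\gamma\in[0,1)$. The joint state space is $\mathcal{S}^{(N)}=\prod_n\mathcal{S}_n$; the joint feasible action set is $\mathcal{A}^{(N)}=\{(a_1,\dots,a_N): a_n\in\mathcal{A}_n,\ \sum_{n=1}^N d_{k,n}(a_n)\le b_k\ \forall k\in[K]\}$ with $d_{k,n}\ge 0$, $b_k\ge0$, and an idle action consuming no resource. Joint transitions are $P^{(N)}(\mathbf{s}'|\mathbf{s},\mathbf{a})=\prod_{n}p_n(s'_n|s_n,a_n)$ and the vector reward is $\mathbf{r}(\mathbf{s},\mathbf{a})=(r_1(s_1,a_1),\dots,r_N(s_N,a_N))$. The initial joint state is drawn from a distribution $\boldsymbol{\mu}$ on $\mathcal{S}^{(N)}$. A stationary Markov policy $\pi$ gives probabilities $\pi(\mathbf{s},\mathbf{a})$ over $\mathbf{a}\in\mathcal{A}^{(N)}$ for each $\mathbf{s}$. The value vector is $\mathbf{V}_0^{\pi}=\mathbb{E}_{\pi}\big[\sum_{t\ge0}\gamma^t\mathbf{r}(\mathbf{s}_t,\mathbf{a}_t)\,\big|\,\mathbf{s}_0\sim\boldsymbol{\mu}\big]\in\mathbb{R}^N$,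 with components $V^{\pi}_{0,n}$. Permutations: for a permutation $\sigma$ of $[N]$, the permutation operator $Q$ acts on any $N$-tuple $\mathbf{v}$ by $(Q\mathbf{v})_n=v_{\sigma(n)}$; it acts in the same way on joint states and joint actions. $\mathcal{G}^N$ denotes the set of all $N!$ such operators. The WCMDP is symmetric if: (1) all sub-MDPs are identical ($\mathcal{S}_n=\mathcal{S}$, $\mathcal{A}_n=\mathcal{A}$, $p_n=p$, $r_n=r$ for all $n$); (2) resource consumption is symmetric ($d_{k,n}=d_k$ for all $n$); (3) $\boldsymbol{\mu}(\mathbf{s}_0)=\boldsymbol{\mu}(Q\mathbf{s}_0)$ for all $\mathbf{s}_0$ and all $Q\in\mathcal{G}^N$. A stationary Markov policy $\pi$ is permutation invariant if $\pi(\mathbf{s},\mathbf{a})=\pi(Q\mathbf{s},Q\mathbf{a})$ for all $Q\in\mathcal{G}^N$, $\mathbf{s}$, $\mathbf{a}$. *)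

(* Defs.v *)
From HB Require Import structures.
From mathcomp Require Import all_boot all_order all_algebra all_fingroup.
From mathcomp Require Import all_classical all_reals all_analysis.
Set Implicit Arguments. Unset Strict Implicit. Unset Printing Implicit Defensive.
Import Order.TTheory GRing.Theory Num.Theory numFieldNormedType.Exports.
Local Open Scope ring_scope.

(* A symmetric WCMDP with N identical sub-MDPs with state set S, action set A,
   kernel p (p s a s' = p(s'|s,a)), reward r, K resource constraints with
   per-arm consumption d k a and budgets b k. *)

Definition jstate (S : finType) (N : nat) := {ffun 'I_N -> S}.
Definition jaction (A : finType) (N : nat) := {ffun 'I_N -> A}.

Definition permQ (T : Type) (N : nat) (sigma : {perm 'I_N}) (v : {ffun 'I_N -> T})
  : {ffun 'I_N -> T} := [ffun n => v (sigma n)].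

Definition feasible (R : realType) (A : finType) (N K : nat)
  (d : 'I_K -> A -> R) (b : 'I_K -> R) (a : jaction A N) : bool :=
  [forall k, \sum_(n < N) d k (a n) <= b k].

Definition is_kernel (R : realType) (S A : finType) (p : S -> A -> S -> R) : Prop :=
  (forall s a s', 0 <= p s a s') /\ (forall s a, \sum_(s' : S) p s a s' = 1).

Definition is_distr (R : realType) (S : finType) (N : nat) (mu : jstate S N -> R) : Prop :=
  (forall s, 0 <= mu s) /\ \sum_(s : jstate S N) mu s = 1.

Definition is_policy (R : realType) (S A : finType) (N K : nat)
  (d : 'I_K -> A -> R) (b : 'I_K -> R) (pi : jstate S N -> jaction A N -> R) : Prop :=
  [/\ (forall s a, 0 <= pi s a),
      (forall s a, ~~ feasible d b a -> pi s a = 0)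
    & (forall s, \sum_(a : jaction A N) pi s a = 1)].

Definition perm_invariant (R : realType) (S A : finType) (N : nat)
  (pi : jstate S N -> jaction A N -> R) : Prop :=
  forall (sigma : {perm 'I_N}) s a, pi s a = pi (permQ sigma s) (permQ sigma a).

Definition jtrans (R : realType) (S A : finType) (N : nat) (p : S -> A -> S -> R)
  (s : jstate S N) (a : jaction A N) (s' : jstate S N) : R :=
  \prod_(n < N) p (s n) (a n) (s' n).

Fixpoint state_law (R : realType) (S A : finType) (N : nat) (p : S -> A -> S -> R)
  (mu : jstate S N -> R) (pi : jstate S N -> jaction A N -> R) (t : nat)
  : jstate S N -> R :=
  match t with
  | 0 => mu
  | t'.+1 => fun s' => \sum_(s : jstate S N) \sum_(a : jaction A N)
              state_law p mu pi t' s * pi s a * jtrans p s a s'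
  end.

Definition exp_reward (R : realType) (S A : finType) (N : nat) (p : S -> A -> S -> R)
  (r : S -> A -> R) (mu : jstate S N -> R) (pi : jstate S N -> jaction A N -> R)
  (t : nat) (n : 'I_N) : R :=
  \sum_(s : jstate S N) \sum_(a : jaction A N)
    state_law p mu pi t s * pi s a * r (s n) (a n).

(* V^pi_{0,n} = E_pi[ sum_t gamma^t r_n(s_t,a_t) ] = sum_t gamma^t E_pi[r_n(s_t,a_t)] *)
Definition value (R : realType) (S A : finType) (N : nat) (p : S -> A -> S -> R)
  (r : S -> A -> R) (gamma : R) (mu : jstate S N -> R)
  (pi : jstate S N -> jaction A N -> R) (n : 'I_N) : R :=
  limn (series (fun t : nat => gamma ^+ t * exp_reward p r mu pi t n)).

(* Main.v *)
Require Import Defs.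
From HB Require Import structures.
From mathcomp Require Import all_boot all_order all_algebra all_fingroup.
From mathcomp Require Import all_classical all_reals all_analysis.
From mathcomp Require Import ring lra.
Import Order.TTheory GRing.Theory Num.Theory numFieldNormedType.Exports.
Local Open Scope ring_scope.
Local Open Scope classical_set_scope.
Set Implicit Arguments. Unset Strict Implicit. Unset Printing Implicit Defensive.

Section Gen.
Variables (R : realType) (X : finType) (M : X -> X -> R) (mu : X -> R) (gamma : R).
Hypothesis M0 : forall s s', 0 <= M s s'.
Hypothesis M1 : forall s, \sum_s' M s s' = 1.
Hypothesis g0 : 0 <= gamma.
Hypothesis g1 : gamma < 1.

Fixpoint lawM t : X -> R := match t with
  | 0 => mu | t'.+1 => fun s' => \sum_s lawM t' s * M s s' end.

Definition Mop (h : X -> R) : X -> R := fun s => \sum_s' M s s' * h s'.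

Lemma law_Mop t h : \sum_s lawM t s * h s = \sum_s mu s * iter t Mop h s.
Proof.
elim: t h => [|t IH] h //=.
rewrite -iterS iterSr -IH.
under eq_bigr do rewrite big_distrl /=.
rewrite exchange_big /=; apply: eq_bigr => s _.
rewrite /Mop big_distrr /=; apply: eq_bigr => s' _; by rewrite mulrA.
Qed.

Lemma Mop_bound h B : (forall s, `|h s| <= B) -> forall s, `|Mop h s| <= B.
Proof.
move=> hB s; rewrite /Mop.
apply: le_trans (ler_norm_sum _ _ _) _.
apply: le_trans (_ : \sum_s' M s s' * B <= B).
  apply: ler_sum => s' _; rewrite normrM ger0_norm //; apply: ler_wpM2l => //.
by rewrite -big_distrl /= M1 mul1r.
Qed.

Lemma iter_bound t h B : (forall s, `|h s| <= B) -> forall s, `|iter t Mop h s| <= B.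
Proof. elim: t => [|t IH] hB //=; exact: Mop_bound (IH hB). Qed.

Lemma cvg_sum_seq (I : Type) (r : seq I) (F : I -> nat -> R) (l : I -> R) :
  (forall i, F i n @[n --> \oo] --> l i) ->
  \sum_(i <- r) F i n @[n --> \oo] --> \sum_(i <- r) l i.
Proof.
move=> H; elim: r => [|i r IH].
  have -> : (fun n => \sum_(j <- [::]) F j n) = fun=> 0 by apply/funext=> n; rewrite big_nil.
  rewrite big_nil; exact: cvg_cst.
have -> : (fun n => \sum_(j <- i :: r) F j n) = fun n => F i n + \sum_(j <- r) F j n.
  by apply/funext=> n; rewrite big_cons.
rewrite big_cons; exact: cvgD.
Qed.

Lemma lemK (Y : X -> R) (HY : forall s', Y s' = mu s' + gamma * \sum_s Y s * M s s')
  (f : X -> R) :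
  series (fun t => gamma ^+ t * \sum_s lawM t s * f s) n @[n --> \oo]
   --> \sum_s Y s * f s.
Proof.
pose u := fun t => gamma ^+ t * \sum_s lawM t s * f s.
change (series u n @[n --> \oo] --> \sum_s Y s * f s).
have step h : \sum_s Y s * h s = \sum_s mu s * h s + gamma * \sum_s Y s * Mop h s.
  under eq_bigr do rewrite HY mulrDl.
  rewrite big_split /=; congr (_ + _).
  transitivity (\sum_s' \sum_s gamma * (Y s * (M s s' * h s'))).
    apply: eq_bigr => s' _; rewrite big_distrr big_distrl /=.
    by apply: eq_bigr => s _; rewrite !mulrA.
  rewrite exchange_big [RHS]big_distrr /=; apply: eq_bigr => s _.
  by rewrite /Mop 2!big_distrr.
set l := \sum_s Y s * f s.
have id T : l = series u T + gamma ^+ T * \sum_s Y s * iter T Mop f s.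
  elim: T => [|T IH]; first by rewrite /series /= big_geq // expr0 mul1r add0r.
  rewrite seriesSr IH /u /= law_Mop step exprSr; ring.
set B := \sum_s `|f s|.
have hB : forall s, `|f s| <= B.
  by move=> s; rewrite /B (bigD1 s) //= lerDl sumr_ge0.
set C := \sum_s `|Y s| * B.
have cB T : `|\sum_s Y s * iter T Mop f s| <= C.
  apply: le_trans (ler_norm_sum _ _ _) _; apply: ler_sum => s _.
  rewrite normrM; apply: ler_wpM2l => //; exact: iter_bound.
pose e T := gamma ^+ T * \sum_s Y s * iter T Mop f s.
have -> : series u = fun T => l - e T.
  by apply/funext=> T; rewrite (id T) /e addrK.
rewrite -[X in _ --> X]subr0; apply: cvgB; first exact: cvg_cst.
have gT : (gamma ^+ n) @[n --> \oo] --> 0.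
  by apply: cvg_expr; rewrite ger0_norm.
apply: (@squeeze_cvgr _ _ _ _ (fun T => - (gamma ^+ T * C)) (fun T => gamma ^+ T * C)).
- apply: nearW => T; rewrite /e -ler_norml normrM ger0_norm ?exprn_ge0 //.
  by apply: ler_wpM2l; rewrite ?exprn_ge0.
- rewrite -oppr0; apply: cvgN; rewrite -(mul0r C); exact: cvgMl.
- rewrite -(mul0r C); exact: cvgMl.
Qed.


Hypothesis mu0 : forall s, 0 <= mu s.
Hypothesis mu1 : \sum_s mu s = 1.

Lemma law_ge0 t s : 0 <= lawM t s.
Proof.
elim: t s => [|t IH] s //=; apply: sumr_ge0 => s0 _; exact: mulr_ge0.
Qed.

Lemma law_sum1 t : \sum_s lawM t s = 1.
Proof.
elim: t => [|t IH] //=; rewrite exchange_big /= -[RHS]IH.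
by apply: eq_bigr => s _; rewrite -big_distrr /= M1 mulr1.
Qed.

Lemma law_le1 t s : lawM t s <= 1.
Proof.
by rewrite -(law_sum1 t) (bigD1 s) //= lerDl sumr_ge0 // => i _; exact: law_ge0.
Qed.

Lemma Yexists : exists Y : X -> R, (forall s, 0 <= Y s) /\
  (forall s', Y s' = mu s' + gamma * \sum_s Y s * M s s').
Proof.
pose P s := series (fun t => gamma ^+ t * lawM t s).
have Pnd s : {homo P s : n m / (n <= m)%N >-> n <= m}.
  move=> n m /subnK <-; elim: (m - n)%N => [|k IH] //=.
  rewrite addSn /P seriesSr; apply: le_trans IH _.
  by rewrite lerDl mulr_ge0 ?exprn_ge0 ?law_ge0.
have Pub s : has_ubound (range (P s)).
  exists (1 - gamma)^-1 => _ [T _ <-].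
  apply: (@le_trans _ _ (\sum_(i < T) gamma ^+ i)).
    rewrite /P /series /= big_mkord; apply: ler_sum => i _.
    by rewrite -[leRHS]mulr1; apply: ler_wpM2l; rewrite ?exprn_ge0 ?law_le1.
  have g1' : 0 < 1 - gamma by rewrite subr_gt0.
  rewrite -[X in _ <= X]mul1r ler_pdivlMr // mulrC.
  have -> : (1 - gamma) * \sum_(i < T) gamma ^+ i = 1 - gamma ^+ T.
    by rewrite -opprB mulNr -subrX1 opprB.
  by rewrite lerBlDr lerDl exprn_ge0.
have Pc s : cvgn (P s) by apply: nondecreasing_is_cvgn.
exists (fun s => limn (P s)); split.
  move=> s; apply: le_trans (nondecreasing_cvgn_le (Pnd s) (Pc s) 0).
  by rewrite /P /series /= big_geq.
move=> s'.
have E : forall T, P s' T.+1 = mu s' + gamma * \sum_s P s T * M s s'.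
  elim=> [|T IH].
    rewrite /P seriesSr /series /= big_geq // big1 ?mulr0 ?addr0 ?add0r ?expr0 ?mul1r //.
    by move=> s _; rewrite big_geq // mul0r.
  rewrite /P seriesSr -/(P s' T.+1) IH -addrA; congr (_ + _).
  rewrite /= exprS -mulrA -mulrDr; congr (_ * _).
  rewrite big_distrr -big_split /=; apply: eq_bigr => s _.
  by rewrite /P seriesSr mulrDl mulrA.
have H1 : (fun T => P s' T.+1) @ \oo --> limn (P s').
  by rewrite (cvg_shiftS (P s')); exact: Pc.
have H2 : (fun T => P s' T.+1) @ \oo --> mu s' + gamma * \sum_s limn (P s) * M s s'.
  rewrite (_ : (fun T => P s' T.+1) = fun T => mu s' + gamma * \sum_s P s T * M s s');
    last by apply/funext => T; exact: E.
  apply: cvgD; first exact: cvg_cst.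
  apply: cvgMr; apply: cvg_sum_seq => s.
  apply: cvgM; [exact: Pc | exact: cvg_cst].
by rewrite -(norm_cvg_lim H1) (norm_cvg_lim H2).
Qed.

End Gen.

Section Spec.
Variables (R : realType) (S A : finType) (N K : nat)
  (p : S -> A -> S -> R) (r : S -> A -> R)
  (d : 'I_K -> A -> R) (b : 'I_K -> R) (idle : A) (gamma : R)
  (mu : jstate S N -> R).
Hypothesis pk : is_kernel p.
Hypothesis g0 : 0 <= gamma.
Hypothesis g1 : gamma < 1.
Hypothesis mud : is_distr mu.

Definition Mk (pi : jstate S N -> jaction A N -> R) (s s' : jstate S N) : R :=
  \sum_(a : jaction A N) pi s a * jtrans p s a s'.
Definition fr (pi : jstate S N -> jaction A N -> R) (n : 'I_N) (s : jstate S N) : R :=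
  \sum_(a : jaction A N) pi s a * r (s n) (a n).

Lemma jtrans_ge0 (s : jstate S N) (a : jaction A N) s' : 0 <= jtrans p s a s'.
Proof. by apply: prodr_ge0 => n _; case: pk. Qed.

Lemma jtrans_sum1 (s : jstate S N) (a : jaction A N) : \sum_(s' : jstate S N) jtrans p s a s' = 1.
Proof.
rewrite /jtrans.
transitivity (\prod_(n < N) \sum_(x : S) p (s n) (a n) x).
  by rewrite bigA_distr_bigA.
by rewrite big1 // => n _; case: pk => _ ->.
Qed.

Lemma Mk_ge0 pi : is_policy d b pi -> forall s s', 0 <= Mk pi s s'.
Proof.
case=> H0 _ _ s s'; apply: sumr_ge0 => a _; apply: mulr_ge0 => //; exact: jtrans_ge0.
Qed.

Lemma Mk_sum1 pi : is_policy d b pi -> forall s, \sum_s' Mk pi s s' = 1.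
Proof.
case=> _ _ H1 s; rewrite /Mk exchange_big /= -[RHS](H1 s).
by apply: eq_bigr => a _; rewrite -big_distrr /= jtrans_sum1 mulr1.
Qed.

Lemma law_eq pi t (s : jstate S N) : state_law p mu pi t s = lawM (Mk pi) mu t s.
Proof.
elim: t s => [|t IH] s //=; apply: eq_bigr => s0 _.
rewrite IH /Mk big_distrr /=; apply: eq_bigr => a _; by rewrite mulrA.
Qed.

Lemma value_eq pi : is_policy d b pi -> forall Y : jstate S N -> R,
  (forall s', Y s' = mu s' + gamma * \sum_s Y s * Mk pi s s') ->
  forall n, value p r gamma mu pi n = \sum_s Y s * fr pi n s.
Proof.
move=> Hpi Y HY n; rewrite /value.
have -> : (fun t => gamma ^+ t * exp_reward p r mu pi t n) =
   (fun t => gamma ^+ t * \sum_s lawM (Mk pi) mu t s * fr pi n s).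
  apply/funext => t; congr (_ * _); rewrite /exp_reward; apply: eq_bigr => s _.
  rewrite law_eq /fr big_distrr /=; apply: eq_bigr => a _; by rewrite mulrA.
apply: norm_cvg_lim; apply: lemK => //; [exact: Mk_ge0 | exact: Mk_sum1].
Qed.

Lemma permQK T (sigma : {perm 'I_N}) (v : {ffun 'I_N -> T}) :
  permQ sigma^-1 (permQ sigma v) = v.
Proof. by apply/ffunP => n; rewrite !ffunE permKV. Qed.

Lemma permQVK T (sigma : {perm 'I_N}) (v : {ffun 'I_N -> T}) :
  permQ sigma (permQ sigma^-1 v) = v.
Proof. by apply/ffunP => n; rewrite !ffunE permK. Qed.

Lemma permQ_inj T (sigma : {perm 'I_N}) : injective (@permQ T N sigma).
Proof. exact: can_inj (permQK sigma). Qed.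

Lemma permQM T (s t : {perm 'I_N}) (v : {ffun 'I_N -> T}) :
  permQ s (permQ t v) = permQ (s * t)%g v.
Proof. by apply/ffunP => n; rewrite !ffunE permM. Qed.

Lemma jtrans_perm sigma (s : jstate S N) (a : jaction A N) (s' : jstate S N) :
  jtrans p (permQ sigma s) (permQ sigma a) (permQ sigma s') = jtrans p s a s'.
Proof.
rewrite /jtrans; under eq_bigr do rewrite !ffunE.
by rewrite [RHS](reindex_inj (@perm_inj _ sigma)).
Qed.

Lemma feasible_perm sigma (a : jaction A N) :
  feasible d b (permQ sigma a) = feasible d b a.
Proof.
rewrite /feasible; apply: eq_forallb => k /=.
under eq_bigr do rewrite ffunE.
by rewrite [X in _ = (X <= _)](reindex_inj (@perm_inj _ sigma)).
Qed.

Lemma sum2_permQ sigma (G : jstate S N -> jaction A N -> R) :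
  \sum_(s : jstate S N) \sum_(a : jaction A N) G (permQ sigma s) (permQ sigma a) =
  \sum_(s : jstate S N) \sum_(a : jaction A N) G s a.
Proof.
rewrite [RHS](reindex_inj (@permQ_inj S sigma)); apply: eq_bigr => s _.
by rewrite [RHS](reindex_inj (@permQ_inj A sigma)).
Qed.


Lemma sum_permQ (T : finType) (sigma : {perm 'I_N}) (F : {ffun 'I_N -> T} -> R) :
  \sum_v F v = \sum_v F (permQ sigma v).
Proof. exact: reindex_inj (@permQ_inj T sigma). Qed.

Lemma main_part (d0 : forall k a, 0 <= d k a) (b0 : forall k, 0 <= b k)
  (didle : forall k, d k idle = 0)
  (musym : forall (sigma : {perm 'I_N}) s0, mu s0 = mu (permQ sigma s0))
  (pi : jstate S N -> jaction A N -> R) :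
  is_policy d b pi ->
  exists pibar : jstate S N -> jaction A N -> R,
    [/\ is_policy d b pibar,
        perm_invariant pibar
      & forall n : 'I_N,
          value p r gamma mu pibar n
          = N%:R^-1 * \sum_(m < N) value p r gamma mu pi m].
Proof.
move=> Hpi; have [Hp0 Hpf Hp1] := Hpi.
case: mud => mu0 mu1.
have [Y [Y0 HY]] := Yexists (Mk_ge0 Hpi) (Mk_sum1 Hpi) g0 g1 mu0 mu1.
pose c : R := #|{perm 'I_N}|%:R.
have c0 : c != 0.
  by rewrite pnatr_eq0 -lt0n; apply/card_gt0P; exists 1%g.
pose Ybar (s : jstate S N) := \sum_(sigma : {perm 'I_N}) Y (permQ sigma s).
pose ybar (s : jstate S N) (a : jaction A N) :=
  \sum_(sigma : {perm 'I_N}) Y (permQ sigma s) * pi (permQ sigma s) (permQ sigma a).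
pose a0 : jaction A N := [ffun=> idle].
pose pibar s a := if Ybar s == 0 then (a == a0)%:R else ybar s a / Ybar s.
pose Z s := Ybar s / c.
have Ybar0 s : 0 <= Ybar s by apply: sumr_ge0.
have ybar0 s a : 0 <= ybar s a by apply: sumr_ge0 => sg _; apply: mulr_ge0.
have sum_ybar s : \sum_a ybar s a = Ybar s.
  rewrite /ybar exchange_big /=; apply: eq_bigr => sg _.
  by rewrite -big_distrr /= -(sum_permQ sg (pi (permQ sg s))) Hp1 mulr1.
have ybarz s a : Ybar s = 0 -> ybar s a = 0.
  move=> E; rewrite /ybar big1 // => sg _.
  by rewrite (psumr_eq0P (fun i _ => Y0 (permQ i s)) E) // mul0r.
have Zpi s a : Z s * pibar s a = c^-1 * ybar s a.
  rewrite /Z /pibar; case: (Ybar s =P 0) => [E|E].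
    by rewrite (ybarz _ _ E) E !mul0r mulr0.
  rewrite [Ybar s / c]mulrC -mulrA mulrCA mulrCA; congr (_ * _); rewrite mulrCA mulfV ?mulr1 //; exact/eqP.
have fa0 : feasible d b a0.
  by apply/forallP => k; rewrite big1 // => n _; rewrite ffunE didle.
have e1 (g : jstate S N -> jaction A N -> R) :
  \sum_s Z s * \sum_a pibar s a * g s a =
  c^-1 * \sum_(sg : {perm 'I_N}) \sum_s \sum_a
     Y (permQ sg s) * pi (permQ sg s) (permQ sg a) * g s a.
  transitivity (c^-1 * \sum_s \sum_a ybar s a * g s a).
    rewrite big_distrr; apply: eq_bigr => s _ /=.
    rewrite !big_distrr; apply: eq_bigr => a _ /=.
    by rewrite mulrA Zpi mulrA.
  congr (_ * _); rewrite [RHS]exchange_big /=; apply: eq_bigr => s _.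
  rewrite exchange_big /=; apply: eq_bigr => a _.
  by rewrite /ybar big_distrl.
have HZ s' : Z s' = mu s' + gamma * \sum_s Z s * Mk pibar s s'.
  have key sg : gamma * \sum_s \sum_a
      Y (permQ sg s) * pi (permQ sg s) (permQ sg a) * jtrans p s a s' =
      Y (permQ sg s') - mu s'.
    under eq_bigr do under eq_bigr do rewrite -(jtrans_perm sg).
    rewrite (sum2_permQ sg (fun u v => Y u * pi u v * jtrans p u v (permQ sg s'))).
    rewrite (musym sg s') [in RHS]HY addrC addKr; congr (_ * _).
    apply: eq_bigr => s _; rewrite /Mk big_distrr; apply: eq_bigr => a _.
    by rewrite /= mulrA.
  rewrite /Mk e1 mulrCA big_distrr /=.
  under eq_bigr do rewrite key.
  rewrite sumrB sumr_const -mulr_natr (_ : (#|xpredT|%:R : R) = c) // -/(Ybar s') /Z.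
  by field.
have Hpb : is_policy d b pibar.
  split.
  - move=> s a; rewrite /pibar; case: (Ybar s =P 0) => _; [exact: ler0n | exact: divr_ge0].
  - move=> s a Hf; rewrite /pibar; case: (Ybar s =P 0) => _.
      have -> : (a == a0) = false by apply/negbTE/eqP => E; move: Hf; rewrite E fa0.
      by [].
    rewrite /ybar big1 ?mul0r // => sg _; by rewrite Hpf ?mulr0 // feasible_perm.
  - move=> s; rewrite /pibar; case: (Ybar s =P 0) => E.
      by rewrite (bigD1 a0) //= eqxx big1 ?addr0 // => a /negbTE ->.
    by rewrite -big_distrl /= sum_ybar mulfV //; apply/eqP.
have YbarP t s : Ybar (permQ t s) = Ybar s.
  rewrite /Ybar [RHS](reindex_inj (mulIg t)); apply: eq_bigr => sg _; by rewrite permQM.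
have ybarP t s a : ybar (permQ t s) (permQ t a) = ybar s a.
  rewrite /ybar [RHS](reindex_inj (mulIg t)); apply: eq_bigr => sg _; by rewrite !permQM.
have a0P t a : (permQ t a == a0) = (a == a0).
  rewrite -[in LHS](_ : permQ t a0 = a0); first exact: (inj_eq (@permQ_inj A t)).
  by apply/ffunP => n; rewrite !ffunE.
have Vbar n : value p r gamma mu pibar n =
    c^-1 * \sum_(sg : {perm 'I_N}) value p r gamma mu pi ((sg^-1)%g n).
  rewrite (value_eq Hpb HZ) /fr e1; congr (_ * _); apply: eq_bigr => sg _.
  rewrite (value_eq Hpi HY) /fr.
  transitivity (\sum_s \sum_a Y s * pi s a * r (s ((sg^-1)%g n)) (a ((sg^-1)%g n))).
    rewrite -(sum2_permQ sg (fun u v => Y u * pi u v * r (u ((sg^-1)%g n)) (v ((sg^-1)%g n)))).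
    by apply: eq_bigr => s _; apply: eq_bigr => a _; rewrite /= !ffunE !permKV.
  apply: eq_bigr => s _; rewrite big_distrr; apply: eq_bigr => a _ /=; by rewrite mulrA.
exists pibar; split => //.
  by move=> t s a; rewrite /pibar YbarP ybarP a0P.
move=> n; rewrite Vbar.
set V := fun m => value p r gamma mu pi m.
have G1 : \sum_(sg : {perm 'I_N}) V ((sg^-1)%g n) = \sum_(sg : {perm 'I_N}) V (sg n).
  by rewrite [RHS](reindex_inj invg_inj).
have Gc m m' : \sum_(sg : {perm 'I_N}) V (sg m) = \sum_(sg : {perm 'I_N}) V (sg m').
  rewrite [LHS](reindex_inj (mulgI (tperm m m'))); apply: eq_bigr => sg _.
  by rewrite permM tpermL.
have NG : N%:R * \sum_(sg : {perm 'I_N}) V (sg n) = c * \sum_(m < N) V m.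
  transitivity (\sum_(m < N) \sum_(sg : {perm 'I_N}) V (sg m)).
    rewrite [RHS](eq_bigr (fun _ : 'I_N => \sum_(sg : {perm 'I_N}) V (sg n))) => [|m _]; last exact: Gc.
    by rewrite sumr_const card_ord mulr_natl.
  rewrite exchange_big /=.
  rewrite (eq_bigr (fun _ => \sum_(m < N) V m)) => [|sg _]; last first.
    by rewrite [RHS](reindex_inj (@perm_inj _ sg)).
  by rewrite sumr_const -mulr_natl (_ : (#|xpredT|%:R : R) = c).
have N0 : N%:R != 0 :> R.
  by rewrite pnatr_eq0 -lt0n; exact: (leq_ltn_trans (leq0n n) (ltn_ord n)).
rewrite G1.
have -> : \sum_(sg : {perm 'I_N}) V (sg n) = c * (\sum_(m < N) V m) / N%:R.
  by apply: (mulfI N0); rewrite NG mulrCA mulfV // mulr1.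
by rewrite mulrA mulKf // mulrC.
Qed.

End Spec.

Theorem lemma3p1 (R : realType) (S A : finType) (N K : nat)
  (p : S -> A -> S -> R) (r : S -> A -> R)
  (d : 'I_K -> A -> R) (b : 'I_K -> R) (idle : A) (gamma : R)
  (mu : jstate S N -> R) :
  is_kernel p ->
  (forall k a, 0 <= d k a) ->
  (forall k, 0 <= b k) ->
  (forall k, d k idle = 0) ->
  0 <= gamma -> gamma < 1 ->
  is_distr mu ->
  (forall (sigma : {perm 'I_N}) s0, mu s0 = mu (permQ sigma s0)) ->
  forall pi : jstate S N -> jaction A N -> R,
  is_policy d b pi ->
  exists pibar : jstate S N -> jaction A N -> R,
    [/\ is_policy d b pibar,
        perm_invariant pibar
      & forall n : 'I_N,
          value p r gamma mu pibar n
          = N%:R^-1 * \sum_(m < N) value p r gamma mu pi m].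
Proof.
move=> pk d0 b0 didle g0 g1 mud musym pi Hpi.
exact: (main_part r pk g0 g1 mud d0 b0 didle musym Hpi).
Qed.
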